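(* Let $\lambda\in\mathbb R$ and write $u=x^2+x^4$. A smooth covector field $A$ on $\mathbb R^4$ satisfies $L_\xi A=0$ for $\xi\in\{e_{12}-e_{14}+\lambda e_2,\,e_1,\,e_3,\,e_2-e_4\}$ if and only if: (i) when $\lambda\neq0$, there are real constants $C_1,\dots,C_4$ with $$A_1=\frac{C_2}{\lambda}u+C_3,\quad A_2=\frac{C_2}{2\lambda^2}u^2+\frac{C_3}{\lambda}u+C_4,\quad A_3=C_1,\quad A_4=A_2+C_2;$$ (ii) when $\lambda=0$, $A_1=0$, $A_2=A_4=\Phi(u)$, $A_3=\Psi(u)$ for some smooth functions $\Phi,\Psi$ of one variable.
   Context: Work in $\mathbb R^4$ with Galilean (Cartesian) coordinates $x^1,x^2,x^3,x^4$ of Minkowski space (metric $\mathrm{diag}(-1,-1,-1,1)$). A potential on an open set $U\subseteq\mathbb R^4$ is a smooth covector field $A=A_i\,dx^i$; its components $A_i$ are always those with respect to the coordinates $x^i$, even when written as functions of other variables. For a vector field $\xi=\xi^k\partial_k$ the Lie derivative is $(L_\xi A)_i=\xi^k\partial_kA_i+A_k\partial_i\xi^k$. The vector fields used are, by components $(\xi^1,\xi^2,\xi^3,\xi^4)$: $e_1=(1,0,0,0)$, $e_2=(0,1,0,0)$, $e_3=(0,0,1,0)$, $e_4=(0,0,0,1)$, $e_{12}=(-x^2,x^1,0,0)$, $e_{13}=(x^3,0,-x^1,0)$, $e_{23}=(0,-x^3,x^2,0)$, $e_{14}=(x^4,0,0,x^1)$, $e_{24}=(0,x^4,0,x^2)$,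 $e_{34}=(0,0,x^4,x^3)$. A potential admits a family of vector fields if $L_\xi A=0$ for each $\xi$ in it (equivalently for every element of their linear span). ''Functions'' are smooth real functions; $\mathrm{ch}=\cosh$, $\mathrm{sh}=\sinh$. *)

(* Defs.v *)
From Stdlib Require Import Reals.
From Coquelicot Require Import Coquelicot.
Open Scope R_scope.

Inductive idx : Type := I1 | I2 | I3 | I4.

Definition idx_eqb (i j : idx) : bool :=
  match i, j with
  | I1, I1 | I2, I2 | I3, I3 | I4, I4 => true
  | _, _ => false
  end.

Definition pt := idx -> R.

Definition mkpt (a b c d : R) : pt :=
  fun i => match i with I1 => a | I2 => b | I3 => c | I4 => d end.

Definition upd (x : pt) (k : idx) (t : R) : pt :=
  fun j => if idx_eqb j k then t else x j.

Definition partial (k : idx) (f : pt -> R) (x : pt) : R :=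
  Derive (fun t => f (upd x k t)) (x k).

Definition has_partial (k : idx) (f : pt -> R) : Prop :=
  forall x : pt, ex_derive (fun t => f (upd x k t)) (x k).

Definition cont4 (f : pt -> R) : Prop :=
  forall (x : pt) (eps : R), 0 < eps -> exists delta : R, 0 < delta /\
    forall y : pt, (forall j, Rabs (y j - x j) < delta) -> Rabs (f y - f x) < eps.

Fixpoint Ck (k : nat) (f : pt -> R) : Prop :=
  match k with
  | O => cont4 f
  | S k' => cont4 f /\ (forall i, has_partial i f) /\ (forall i, Ck k' (partial i f))
  end.

Definition smooth4 (f : pt -> R) : Prop := forall k, Ck k f.

Definition smooth1 (f : R -> R) : Prop := forall (n : nat) (t : R), ex_derive_n f n t.

(* Covector fields A = A_i dx^i and vector fields xi = xi^k d_k, by components. *)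
Definition covector := idx -> pt -> R.
Definition vfield := idx -> pt -> R.

Definition sum4 (F : idx -> R) : R := F I1 + F I2 + F I3 + F I4.

Definition Lie (xi : vfield) (A : covector) (i : idx) (x : pt) : R :=
  sum4 (fun k => xi k x * partial k (A i) x + A k x * partial i (xi k) x).

Definition admits (A : covector) (xi : vfield) : Prop :=
  forall i x, Lie xi A i x = 0.

Definition vf (f1 f2 f3 f4 : pt -> R) : vfield :=
  fun k => match k with I1 => f1 | I2 => f2 | I3 => f3 | I4 => f4 end.

Definition e1 : vfield := vf (fun _ => 1) (fun _ => 0) (fun _ => 0) (fun _ => 0).
Definition e2 : vfield := vf (fun _ => 0) (fun _ => 1) (fun _ => 0) (fun _ => 0).
Definition e3 : vfield := vf (fun _ => 0) (fun _ => 0) (fun _ => 1) (fun _ => 0).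
Definition e4 : vfield := vf (fun _ => 0) (fun _ => 0) (fun _ => 0) (fun _ => 1).
Definition e12 : vfield := vf (fun x => - x I2) (fun x => x I1) (fun _ => 0) (fun _ => 0).
Definition e14 : vfield := vf (fun x => x I4) (fun _ => 0) (fun _ => 0) (fun x => x I1).

Definition vadd (a b : vfield) : vfield := fun k x => a k x + b k x.
Definition vscale (c : R) (a : vfield) : vfield := fun k x => c * a k x.
Definition vsub (a b : vfield) : vfield := fun k x => a k x - b k x.

Definition u_of (x : pt) : R := x I2 + x I4.

(* Main.v *)
Require Import Defs.
From Stdlib Require Import Reals Lra FunctionalExtensionality.
From Coquelicot Require Import Coquelicot.
Open Scope R_scope.

Ltac dv := match goal with |- context [Derive ?f ?y] =>
  let H := fresh in
  assert (H : is_derive f y _) by (auto_derive; [auto | reflexivity]);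
  rewrite (is_derive_unique f y _ H); clear H end.

Lemma Lie_xi lam A i x :
  Lie (vadd (vsub e12 e14) (vscale lam e2)) A i x =
  (- x I2 - x I4) * partial I1 (A i) x + (x I1 + lam) * partial I2 (A i) x
  + (- x I1) * partial I4 (A i) x +
  match i with I1 => A I2 x - A I4 x | I2 => - A I1 x | I3 => 0 | I4 => - A I1 x end.
Proof.
  unfold Lie, sum4. destruct i; unfold vadd, vsub, vscale, e12, e14, e2, vf;
  unfold partial at 2 4 6 8; cbn [upd idx_eqb]; repeat dv; ring.
Qed.

Lemma Lie_e1 A i x : Lie e1 A i x = partial I1 (A i) x.
Proof.
  unfold Lie, sum4. destruct i; unfold e1, vf;
  unfold partial at 2 4 6 8; cbn [upd idx_eqb]; repeat dv; ring.
Qed.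

Lemma Lie_e3 A i x : Lie e3 A i x = partial I3 (A i) x.
Proof.
  unfold Lie, sum4. destruct i; unfold e3, vf;
  unfold partial at 2 4 6 8; cbn [upd idx_eqb]; repeat dv; ring.
Qed.

Lemma Lie_e24 A i x : Lie (vsub e2 e4) A i x = partial I2 (A i) x - partial I4 (A i) x.
Proof.
  unfold Lie, sum4. destruct i; unfold vsub, e2, e4, vf;
  unfold partial at 2 4 6 8; cbn [upd idx_eqb]; repeat dv; ring.
Qed.

Lemma smooth_cont f : smooth4 f -> cont4 f.
Proof. intros H; exact (H 0%nat). Qed.
Lemma smooth_has f i : smooth4 f -> has_partial i f.
Proof. intros H; destruct (H 1%nat) as [_ [H2 _]]; apply H2. Qed.
Lemma smooth_partial f i : smooth4 f -> smooth4 (partial i f).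
Proof. intros H k; destruct (H (S k)) as [_ [_ H3]]; apply H3. Qed.

Lemma upd_upd x k s t : upd (upd x k s) k t = upd x k t.
Proof. apply functional_extensionality; intro j; unfold upd; destruct (idx_eqb j k); auto. Qed.
Lemma upd_same x k t : upd x k t k = t.
Proof. unfold upd; destruct k; reflexivity. Qed.

Lemma line_deriv f k x t : has_partial k f ->
  is_derive (fun s => f (upd x k s)) t (partial k f (upd x k t)).
Proof.
  intros H. specialize (H (upd x k t)). rewrite upd_same in H.
  unfold partial; rewrite upd_same.
  assert (E: (fun s => f (upd (upd x k t) k s)) = (fun s => f (upd x k s)))
    by (apply functional_extensionality; intro; rewrite upd_upd; auto).
  rewrite E. apply Derive_correct.
  eapply ex_derive_ext; [|exact H]. intro; simpl; rewrite upd_upd; auto.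
Qed.

Lemma deriv0_const (g : R -> R) : (forall t, is_derive g t 0) -> forall a b, g a = g b.
Proof.
  intros H a b. destruct (MVT_gen g a b (fun _ => 0)) as [c [_ Hc]].
  - intros; apply H.
  - intros. apply continuity_pt_filterlim. apply (ex_derive_continuous g). exists 0; apply H.
  - lra.
Qed.

Lemma dir_const f k : has_partial k f -> (forall x, partial k f x = 0) ->
  forall x s t, f (upd x k s) = f (upd x k t).
Proof.
  intros Hh H0 x s t. apply (deriv0_const (fun s => f (upd x k s))).
  intro r. rewrite <- (H0 (upd x k r)). apply line_deriv; auto.
Qed.

Lemma between_abs c x u : Rmin x u <= c <= Rmax x u -> Rabs (c - x) <= Rabs (u - x).
Proof.
  unfold Rmin, Rmax; destruct (Rle_dec x u); intros [H1 H2];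
  unfold Rabs; destruct (Rcase_abs (c - x)); destruct (Rcase_abs (u - x)); lra.
Qed.

Lemma diff_of_partials (F P1 P2 : R -> R -> R) x y :
  (forall u v, is_derive (fun z => F z v) u (P1 u v)) ->
  (forall u v, is_derive (fun z => F u z) v (P2 u v)) ->
  (forall eps, 0 < eps -> exists d, 0 < d /\ forall u v, Rabs (u - x) < d ->
      Rabs (v - y) < d -> Rabs (P1 u v - P1 x y) < eps) ->
  differentiable_pt_lim F x y (P1 x y) (P2 x y).
Proof.
  intros H1 H2 Hc eps.
  assert (He2 : 0 < eps / 2) by (destruct eps; simpl; lra).
  destruct (Hc (eps/2) He2) as [d1 [Hd1 Hd1']].
  assert (Hd : derivable_pt_lim (fun z => F x z) y (P2 x y)) by (apply is_derive_Reals; apply H2).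
  destruct (Hd (eps/2) He2) as [d2 Hd2].
  assert (Hm : 0 < Rmin d1 d2) by (apply Rmin_pos; [lra | destruct d2; simpl; lra]).
  exists (mkposreal _ Hm). simpl. intros u v Hu Hv.
  assert (Hu1 : Rabs (u - x) < d1) by (eapply Rlt_le_trans; [apply Hu | apply Rmin_l]).
  assert (Hv1 : Rabs (v - y) < d1) by (eapply Rlt_le_trans; [apply Hv | apply Rmin_l]).
  assert (Hv2 : Rabs (v - y) < d2) by (eapply Rlt_le_trans; [apply Hv | apply Rmin_r]).
  assert (B2: Rabs (F x v - F x y - P2 x y * (v - y)) <= eps/2 * Rabs (v - y)).
  { destruct (Req_dec v y) as [E|E].
    - subst. replace (F x y - F x y - P2 x y * (y - y)) with 0 by ring.
      rewrite Rabs_R0. replace (y - y) with 0 by ring. rewrite Rabs_R0. lra.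
    - assert (Hh : v - y <> 0) by lra.
      specialize (Hd2 (v - y) Hh Hv2). replace (y + (v - y)) with v in Hd2 by ring.
      replace (F x v - F x y - P2 x y * (v - y)) with
        ((v - y) * ((F x v - F x y) / (v - y) - P2 x y)) by (field; auto).
      rewrite Rabs_mult. rewrite Rmult_comm. apply Rmult_le_compat_r.
      apply Rabs_pos. lra. }
  destruct (MVT_gen (fun z => F z v) x u (fun z => P1 z v)) as [c [Hcr Hceq]].
  { intros; apply H1. }
  { intros. apply continuity_pt_filterlim. apply (ex_derive_continuous (fun z => F z v)). eexists; apply H1. }
  assert (Hcx : Rabs (c - x) < d1) by (eapply Rle_lt_trans; [apply between_abs; apply Hcr | auto]).
  specialize (Hd1' c v Hcx Hv1).
  replace (F u v - F x y - (P1 x y * (u - x) + P2 x y * (v - y))) with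
    ((P1 c v - P1 x y) * (u - x) + (F x v - F x y - P2 x y * (v - y)))
    by (simpl in Hceq; lra).
  eapply Rle_trans; [apply Rabs_triang|].
  rewrite Rabs_mult.
  assert (Ma := Rmax_l (Rabs (u - x)) (Rabs (v - y))).
  assert (Mb := Rmax_r (Rabs (u - x)) (Rabs (v - y))).
  assert (P1p := Rabs_pos (u - x)). assert (P2p := Rabs_pos (v - y)).
  assert (Hpos : 0 < eps) by (destruct eps; simpl; auto).
  set (M := Rmax (Rabs (u - x)) (Rabs (v - y))) in *.
  nra.
Qed.

Lemma diag_const (F P1 P2 : R -> R -> R) :
  (forall u v, is_derive (fun z => F z v) u (P1 u v)) ->
  (forall u v, is_derive (fun z => F u z) v (P2 u v)) ->
  (forall x y eps, 0 < eps -> exists d, 0 < d /\ forall u v, Rabs (u - x) < d ->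
      Rabs (v - y) < d -> Rabs (P1 u v - P1 x y) < eps) ->
  (forall u v, P1 u v = P2 u v) ->
  forall p q, F p q = F (p + q) 0.
Proof.
  intros H1 H2 Hc Heq p q.
  assert (D : forall s, is_derive (fun s => F (p + s) (q - s)) s 0).
  { intro s. apply is_derive_Reals.
    assert (L := derivable_pt_lim_comp_2d F (fun s => p + s) (fun s => q - s) s
      (P1 (p + s) (q - s)) (P2 (p + s) (q - s)) 1 (-1)).
    replace 0 with (P1 (p + s) (q - s) * 1 + P2 (p + s) (q - s) * -1)
      by (rewrite Heq; ring).
    apply L.
    - apply diff_of_partials; auto.
    - apply is_derive_Reals. auto_derive; auto; ring.
    - apply is_derive_Reals. auto_derive; auto; ring. }
  assert (E := deriv0_const _ D 0 q). simpl in E.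
  replace (p + 0) with p in E by ring. replace (q - 0) with q in E by ring.
  replace (q - q) with 0 in E by ring. exact E.
Qed.

Lemma pt_eta (x : pt) : x = mkpt (x I1) (x I2) (x I3) (x I4).
Proof. apply functional_extensionality; intro j; destruct j; reflexivity. Qed.
Lemma upd1 a b c d s : upd (mkpt a b c d) I1 s = mkpt s b c d.
Proof. apply functional_extensionality; intro j; destruct j; reflexivity. Qed.
Lemma upd2 a b c d s : upd (mkpt a b c d) I2 s = mkpt a s c d.
Proof. apply functional_extensionality; intro j; destruct j; reflexivity. Qed.
Lemma upd3 a b c d s : upd (mkpt a b c d) I3 s = mkpt a b s d.
Proof. apply functional_extensionality; intro j; destruct j; reflexivity. Qed.
Lemma upd4 a b c d s : upd (mkpt a b c d) I4 s = mkpt a b c s.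
Proof. apply functional_extensionality; intro j; destruct j; reflexivity. Qed.

Lemma line2 f a c d t : has_partial I2 f ->
  is_derive (fun s => f (mkpt a s c d)) t (partial I2 f (mkpt a t c d)).
Proof.
  intros H. assert (L := line_deriv f I2 (mkpt a 0 c d) t H).
  rewrite upd2 in L. eapply is_derive_ext; [|exact L]. intro; simpl; rewrite upd2; auto.
Qed.
Lemma line4 f a b c t : has_partial I4 f ->
  is_derive (fun s => f (mkpt a b c s)) t (partial I4 f (mkpt a b c t)).
Proof.
  intros H. assert (L := line_deriv f I4 (mkpt a b c 0) t H).
  rewrite upd4 in L. eapply is_derive_ext; [|exact L]. intro; simpl; rewrite upd4; auto.
Qed.

Lemma reduce f : smooth4 f -> (forall x, partial I1 f x = 0) -> (forall x, partial I3 f x = 0) ->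
  (forall x, partial I2 f x = partial I4 f x) ->
  forall x, f x = f (mkpt 0 (u_of x) 0 0).
Proof.
  intros Hs H1 H3 H24 x. rewrite (pt_eta x) at 1. unfold u_of.
  set (a := x I1); set (b := x I2); set (c := x I3); set (d := x I4).
  assert (E1 : f (mkpt a b c d) = f (mkpt 0 b 0 d)).
  { rewrite <- (upd1 0 b c d a).
    rewrite (dir_const f I1 (smooth_has f I1 Hs) H1 (mkpt 0 b c d) a 0).
    rewrite upd1. rewrite <- (upd3 0 b 0 d c).
    rewrite (dir_const f I3 (smooth_has f I3 Hs) H3 (mkpt 0 b 0 d) c 0).
    rewrite upd3. reflexivity. }
  rewrite E1.
  apply (diag_const (fun p q => f (mkpt 0 p 0 q)) (fun p q => partial I2 f (mkpt 0 p 0 q))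
    (fun p q => partial I4 f (mkpt 0 p 0 q))).
  - intros u v. apply line2. apply smooth_has; auto.
  - intros u v. apply line4. apply smooth_has; auto.
  - intros x0 y0 eps Heps.
    destruct (smooth_cont _ (smooth_partial f I2 Hs) (mkpt 0 x0 0 y0) eps Heps) as [dl [Hdl Hdl']].
    exists dl; split; auto. intros u v Hu Hv. apply Hdl'.
    intro j; destruct j; simpl; auto; replace (0 - 0) with 0 by ring; rewrite Rabs_R0; auto.
  - intros; apply H24.
Qed.

Lemma partial_u (f : pt -> R) (G G' : R -> R) :
  (forall x, f x = G (u_of x)) -> (forall t, is_derive G t (G' t)) ->
  forall x, partial I1 f x = 0 /\ partial I2 f x = G' (u_of x) /\
            partial I3 f x = 0 /\ partial I4 f x = G' (u_of x).
Proof.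
  intros Hf HG x. unfold partial.
  repeat split.
  - rewrite (Derive_ext _ (fun _ => G (u_of x))). apply Derive_const.
    intro; rewrite Hf; reflexivity.
  - rewrite (Derive_ext _ (fun s => G (s + x I4))).
    2:{ intro; rewrite Hf; reflexivity. }
    apply is_derive_unique.
    rewrite <- (scal_one (G' (u_of x))).
    apply (is_derive_comp G (fun s => s + x I4)). apply HG. auto_derive; auto; ring.
  - rewrite (Derive_ext _ (fun _ => G (u_of x))). apply Derive_const.
    intro; rewrite Hf; reflexivity.
  - rewrite (Derive_ext _ (fun s => G (x I2 + s))).
    2:{ intro; rewrite Hf; reflexivity. }
    apply is_derive_unique.
    rewrite <- (scal_one (G' (u_of x))).
    apply (is_derive_comp G (fun s => x I2 + s)). apply HG. auto_derive; auto; ring.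
Qed.

Lemma line_smooth f : smooth4 f -> smooth1 (fun t => f (mkpt 0 t 0 0)).
Proof.
  intros Hs.
  assert (K : forall n, Derive_n (fun t => f (mkpt 0 t 0 0)) n =
     (fun t => Nat.iter n (partial I2) f (mkpt 0 t 0 0)) /\
     smooth4 (Nat.iter n (partial I2) f)).
  { induction n as [|n [IH1 IH2]].
    - split; auto.
    - split.
      + apply functional_extensionality; intro t. simpl. rewrite IH1.
        apply is_derive_unique. apply line2. apply smooth_has; auto.
      + simpl. apply smooth_partial; auto. }
  intros n t. destruct n as [|n]. exact I.
  simpl. destruct (K n) as [K1 K2]. rewrite K1. eexists. apply line2. apply smooth_has; auto.
Qed.

Definition gl (A : covector) i t := A i (mkpt 0 t 0 0).
Definition Dl (A : covector) i t := partial I2 (A i) (mkpt 0 t 0 0).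

Lemma forward lam A : (forall i, smooth4 (A i)) ->
  (admits A (vadd (vsub e12 e14) (vscale lam e2)) /\ admits A e1 /\
      admits A e3 /\ admits A (vsub e2 e4)) ->
  (forall i x, A i x = gl A i (u_of x)) /\
  (forall i t, is_derive (gl A i) t (Dl A i t)) /\
  (forall t, lam * Dl A I1 t + gl A I2 t - gl A I4 t = 0 /\
             lam * Dl A I2 t - gl A I1 t = 0 /\
             lam * Dl A I3 t = 0 /\
             lam * Dl A I4 t - gl A I1 t = 0).
Proof.
  intros Hs [Hx [H1 [H3 H24]]].
  assert (P1 : forall i x, partial I1 (A i) x = 0) by (intros; rewrite <- Lie_e1; apply H1).
  assert (P3 : forall i x, partial I3 (A i) x = 0) by (intros; rewrite <- Lie_e3; apply H3).
  assert (P24 : forall i x, partial I2 (A i) x = partial I4 (A i) x)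
    by (intros; assert (E := H24 i x); rewrite Lie_e24 in E; lra).
  split; [|split].
  - intros i x. unfold gl. apply reduce; auto.
  - intros i t. unfold gl, Dl. apply line2. apply smooth_has; auto.
  - intro t. unfold gl, Dl.
    assert (E : forall i, Lie (vadd (vsub e12 e14) (vscale lam e2)) A i (mkpt 0 t 0 0) = 0)
      by (intro; apply Hx).
    assert (E1 := E I1); assert (E2 := E I2); assert (E3 := E I3); assert (E4 := E I4).
    rewrite Lie_xi in E1, E2, E3, E4. rewrite !P1, <- !P24 in *. simpl in *.
    repeat split; lra.
Qed.

Lemma backward lam A (G G' : idx -> R -> R) :
  (forall i x, A i x = G i (u_of x)) ->
  (forall i t, is_derive (G i) t (G' i t)) ->
  (forall t, lam * G' I1 t + G I2 t - G I4 t = 0 /\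
             lam * G' I2 t - G I1 t = 0 /\
             lam * G' I3 t = 0 /\
             lam * G' I4 t - G I1 t = 0) ->
  (admits A (vadd (vsub e12 e14) (vscale lam e2)) /\ admits A e1 /\
      admits A e3 /\ admits A (vsub e2 e4)).
Proof.
  intros HA HG HO.
  assert (P : forall i x, partial I1 (A i) x = 0 /\ partial I2 (A i) x = G' i (u_of x) /\
            partial I3 (A i) x = 0 /\ partial I4 (A i) x = G' i (u_of x))
    by (intros i x; apply (partial_u (A i) (G i) (G' i)); auto).
  repeat split; intros i x.
  - rewrite Lie_xi. destruct (P i x) as [Q1 [Q2 [Q3 Q4]]]. rewrite Q1, Q2, Q4.
    destruct (HO (u_of x)) as [O1 [O2 [O3 O4]]].
    destruct i; rewrite ?HA; lra.
  - rewrite Lie_e1. apply (P i x).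
  - rewrite Lie_e3. apply (P i x).
  - rewrite Lie_e24. destruct (P i x) as [Q1 [Q2 [Q3 Q4]]]. rewrite Q2, Q4; ring.
Qed.

Theorem mainTheorem14 (lam : R) (A : covector) :
  (forall i, smooth4 (A i)) ->
  (lam <> 0 ->
     (admits A (vadd (vsub e12 e14) (vscale lam e2)) /\ admits A e1 /\
      admits A e3 /\ admits A (vsub e2 e4))
     <->
     exists C1 C2 C3 C4 : R, forall x : pt,
       A I1 x = C2 / lam * u_of x + C3 /\
       A I2 x = C2 / (2 * lam ^ 2) * (u_of x) ^ 2 + C3 / lam * u_of x + C4 /\
       A I3 x = C1 /\
       A I4 x = A I2 x + C2) /\
  (lam = 0 ->
     (admits A (vadd (vsub e12 e14) (vscale lam e2)) /\ admits A e1 /\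
      admits A e3 /\ admits A (vsub e2 e4))
     <->
     exists Phi Psi : R -> R, smooth1 Phi /\ smooth1 Psi /\ forall x : pt,
       A I1 x = 0 /\ A I2 x = Phi (u_of x) /\ A I4 x = Phi (u_of x) /\
       A I3 x = Psi (u_of x)).
Proof.
  intros Hs. split; intros Hlam; split.
  - intros Hadm. destruct (forward lam A Hs Hadm) as [Hr [Hd HO]].
    assert (D3 : forall t, Dl A I3 t = 0).
    { intro t; destruct (HO t) as [_ [_ [O3 _]]].
      apply Rmult_integral in O3; destruct O3; [contradiction|auto]. }
    assert (G3 : forall t, gl A I3 t = gl A I3 0).
    { intro; apply deriv0_const; intro s; rewrite <- (D3 s); apply Hd. }
    assert (G42 : forall t, gl A I4 t - gl A I2 t = gl A I4 0 - gl A I2 0).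
    { intro t. apply (deriv0_const (fun t => gl A I4 t - gl A I2 t)). intro s.
      replace 0 with (Dl A I4 s - Dl A I2 s).
      { apply is_derive_Reals; apply derivable_pt_lim_minus; apply is_derive_Reals; apply Hd. }
      destruct (HO s) as [_ [O2 [_ O4]]].
      apply (Rmult_eq_reg_l lam); [|auto]. lra. }
    set (C2 := gl A I4 0 - gl A I2 0) in *.
    assert (G1 : forall t, gl A I1 t - C2/lam * t = gl A I1 0 - C2/lam*0).
    { intro t. apply (deriv0_const (fun t => gl A I1 t - C2/lam * t)). intro s.
      replace 0 with (Dl A I1 s - C2/lam).
      { apply is_derive_Reals; apply derivable_pt_lim_minus; apply is_derive_Reals. apply Hd. auto_derive; auto; ring. }
      destruct (HO s) as [O1 _]. specialize (G42 s).
      assert (E : lam * Dl A I1 s = C2) by lra.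
      replace (Dl A I1 s) with ((lam * Dl A I1 s)/lam) by (field; auto).
      rewrite E. field; auto. }
    set (C3 := gl A I1 0) in *.
    assert (G2 : forall t, gl A I2 t - (C2/(2*lam^2) * t^2 + C3/lam * t)
                      = gl A I2 0 - (C2/(2*lam^2)*0^2 + C3/lam*0)).
    { intro t. apply (deriv0_const (fun t => gl A I2 t - (C2/(2*lam^2)*t^2 + C3/lam*t))).
      intro s.
      assert (E1 : gl A I1 s = C2/lam*s + C3) by (specialize (G1 s); lra).
      destruct (HO s) as [_ [O2 _]].
      assert (E2 : Dl A I2 s = (C2/lam*s + C3)/lam).
      { rewrite <- E1. replace (Dl A I2 s) with ((lam * Dl A I2 s)/lam) by (field; auto).
        f_equal. lra. }
      replace 0 with (Dl A I2 s - (C2/lam^2 * s + C3/lam)).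
      { apply is_derive_Reals; apply derivable_pt_lim_minus; apply is_derive_Reals. apply Hd. auto_derive; auto; field; auto. }
      rewrite E2. field; auto. }
    exists (gl A I3 0), C2, C3, (gl A I2 0). intro x. rewrite !Hr.
    specialize (G1 (u_of x)); specialize (G2 (u_of x)); specialize (G3 (u_of x));
    specialize (G42 (u_of x)).
    repeat split.
    + lra.
    + replace (C2 / (2 * lam ^ 2) * 0 ^ 2 + C3 / lam * 0) with 0 in G2 by ring. lra.
    + lra.
    + lra.
  - intros [C1 [C2 [C3 [C4 HC]]]].
    apply (backward lam A
      (fun i => match i with I1 => fun t => C2/lam*t + C3
         | I2 => fun t => C2/(2*lam^2)*t^2 + C3/lam*t + C4 | I3 => fun _ => C1
         | I4 => fun t => C2/(2*lam^2)*t^2 + C3/lam*t + C4 + C2 end)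
      (fun i => match i with I1 => fun _ => C2/lam | I2 => fun t => C2/lam^2*t + C3/lam
         | I3 => fun _ => 0 | I4 => fun t => C2/lam^2*t + C3/lam end)).
    + intros i x; destruct (HC x) as [h1 [h2 [h3 h4]]]; destruct i; cbv beta iota; auto.
      rewrite h4, h2; ring.
    + intros i t; destruct i; simpl; auto_derive; auto; field; auto.
    + intro t; simpl; repeat split; field; auto.
  - intros Hadm. destruct (forward lam A Hs Hadm) as [Hr [Hd HO]].
    exists (gl A I2), (gl A I3). split; [apply line_smooth; auto|split;[apply line_smooth; auto|]].
    intro x. rewrite !Hr. destruct (HO (u_of x)) as [O1 [O2 _]]. subst lam.
    repeat split; lra.
  - intros [Phi [Psi [HP [HQ HA]]]].
    apply (backward lam A
      (fun i => match i with I1 => fun _ => 0 | I2 => Phi | I3 => Psi | I4 => Phi end)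
      (fun i => match i with I1 => fun _ => 0 | I2 => Derive Phi | I3 => Derive Psi
         | I4 => Derive Phi end)).
    + intros i x; destruct (HA x) as [h1 [h2 [h4 h3]]]; destruct i; simpl; auto.
    + intros i t; destruct i; simpl.
      * auto_derive; auto.
      * apply Derive_correct. exact (HP 1%nat t).
      * apply Derive_correct. exact (HQ 1%nat t).
      * apply Derive_correct. exact (HP 1%nat t).
    + intro t; subst lam; simpl; repeat split; ring.
Qed.
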